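(* Let $\alpha=\tfrac12$, $K>0$, and let $\{\mu_n\}_{n\in\mathbb N}$ and $\mu$ be in $\mathcal P(\mathbb T\times\mathbb R)$ with $\mu_n\to\mu$ narrowly. Then $$\lim_{n\to\infty}\sup_{\Omega\in\mathbb R}|\mathcal V[\mu_n](z,\Omega)-\mathcal V[\mu](z,\Omega)|=0$$ for every $z\in\mathbb T$ which is a continuity point of the marginal $(\pi_z)_\#\mu$ (i.e. $(\pi_z)_\#\mu(\{z\})=0$). In particular this holds for almost every $z\in\mathbb T$.
   Context: $\mathbb T$ is the unit circle identified with $(-\pi,\pi]$ via $z=e^{i\theta}$; $|\theta|_o$ = absolute value of the representative of $\theta$ mod $2\pi$ in $(-\pi,\pi]$; $\pi_z(z,\Omega)=z$. Critical kernel $h(\theta)=\sin\theta/|\theta|_o$, $\theta\notin2\pi\mathbb Z$. For a finite measure $\mu$: $\mathcal P[\mu](\theta,\Omega)=\Omega-K\int_{(\mathbb T\setminus\{e^{i\theta}\})\times\mathbb R}h(\theta-\theta')\,d\mu(\theta',\Omega')$ and $\mathcal V[\mu](z,\Omega)=(\mathcal P[\mu](z,\Omega)\,iz,0)$, a tangent vector to $\mathbb T\times\mathbb R$ at $(z,\Omega)$, whose norm is taken in the product Riemannian metric. Narrow convergence means convergence against all bounded continuous functions. *)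

(* Defs.v *)
From HB Require Import structures.
From mathcomp Require Import all_boot all_order all_algebra.
From mathcomp Require Import all_classical all_reals all_analysis.
Set Implicit Arguments. Unset Strict Implicit. Unset Printing Implicit Defensive.
Import Order.TTheory GRing.Theory Num.Theory.
Import numFieldNormedType.Exports.
Local Open Scope classical_set_scope.
Local Open Scope ring_scope.

(* T is identified with (-pi, pi] via z = e^{i theta}; a point of T x R is
   represented by (theta, Omega) : R * R.  A probability measure on T x R is
   a probability measure on R * R concentrated on (-pi,pi] x R. *)

Section Defs.
Variable R : realType.

Definition ang_rep (x : R) : R :=
  x - 2 * pi * (Num.ceil ((x - pi) / (2 * pi)))%:~R.

Definition ang_abs (x : R) : R := `| ang_rep x |.

(* critical kernel, alpha = 1/2 : h(x) = sin x / |x|_o^{2 alpha} = sin x / |x|_o *)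
Definition hcrit (x : R) : R := sin x / ang_abs x.

Definition is_probTR (mu : probability (R * R)%type R) : Prop :=
  mu (`]-pi, pi] `*` setT) = 1%E.

Definition Pfield (K : R) (mu : probability (R * R)%type R) (theta Omega : R) : R :=
  Omega - K * Rintegral mu [set p : R * R | ang_abs (theta - p.1) != 0]
                         (fun p => hcrit (theta - p.1)).

(* tangent vectors to T x R at (z, Omega), with T embedded in R^2 as
   z = (cos theta, sin theta); a tangent vector is (a, b, c) with (a,b)
   tangent to T at z and c tangent to R.  iz = (- sin theta, cos theta). *)
Definition Vfield (K : R) (mu : probability (R * R)%type R) (theta Omega : R)
  : R * R * R :=
  (Pfield K mu theta Omega * (- sin theta),
   Pfield K mu theta Omega * cos theta, 0).

Definition tnorm (v : R * R * R) : R :=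
  Num.sqrt (v.1.1 ^+ 2 + v.1.2 ^+ 2 + v.2 ^+ 2).

Definition tsub (v w : R * R * R) : R * R * R :=
  (v.1.1 - w.1.1, v.1.2 - w.1.2, v.2 - w.2).

(* narrow convergence on T x R: against all bounded continuous functions
   on T x R, i.e. bounded continuous functions of (theta, Omega) that are
   2pi-periodic in theta *)
Definition narrow_cvg (mun : nat -> probability (R * R)%type R)
  (mu : probability (R * R)%type R) : Prop :=
  forall f : R * R -> R,
    continuous f ->
    (exists M : R, forall p, `| f p | <= M) ->
    (forall th Om, f (th + 2 * pi, Om) = f (th, Om)) ->
    (fun n => Rintegral (mun n) setT f) @ \oo --> Rintegral mu setT f.

Definition supdiff (K : R) (nu mu : probability (R * R)%type R) (theta : R)
  : \bar R :=
  ereal_sup [set (tnorm (tsub (Vfield K nu theta Om) (Vfield K mu theta Om)))%:E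
            | Om in [set: R]].

End Defs.

(* Main.v *)
Require Import Defs.
From HB Require Import structures.
From mathcomp Require Import all_boot all_order all_algebra.
From mathcomp Require Import all_classical all_reals all_analysis.
From mathcomp Require Import lra ring zify.
Import Order.TTheory GRing.Theory Num.Theory.
Import numFieldNormedType.Exports.
Local Open Scope classical_set_scope.
Local Open Scope ring_scope.
Set Implicit Arguments. Unset Strict Implicit. Unset Printing Implicit Defensive.

Section Ang.
Variable R : realType.
Implicit Types x y : R.

Lemma pi2_gt0 : 0 < 2 * pi :> R.
Proof. by rewrite mulr_gt0 // pi_gt0. Qed.

Lemma ang_rep_itv x : - pi < ang_rep x <= pi.
Proof.
rewrite /ang_rep; set c := Num.ceil _.
have := ceil_itv ((x - pi) / (2 * pi)); rewrite -/c => /andP[h1 h2].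
have hp := @pi2_gt0.
move: h1 h2; rewrite ltr_pdivlMr // ler_pdivrMr // => h1 h2.
rewrite intrB in h1.
apply/andP; split.
  rewrite ltrBrDl. rewrite mulrC. nra.
rewrite lerBlDl mulrC. nra.
Qed.

Lemma ang_rep_eq x : x = ang_rep x + 2 * pi * (Num.ceil ((x - pi) / (2 * pi)))%:~R.
Proof. by rewrite /ang_rep subrK. Qed.

Lemma int_small (m : int) : `|(m%:~R : R)| < 1 -> m = 0.
Proof.
rewrite -intr_norm ltrz1 => h.
move: h; lia.
Qed.

Lemma ang_rep_uniq x r (k : int) : - pi < r <= pi -> x = r + 2 * pi * k%:~R ->
  ang_rep x = r.
Proof.
move=> /andP[r1 r2] hx.
have := ang_rep_itv x => /andP[a1 a2].
have e := ang_rep_eq x.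
set c := Num.ceil _ in e.
have hp := @pi2_gt0.
have : (k - c)%:~R = (ang_rep x - r) / (2 * pi) :> R.
  rewrite intrB; apply: (mulIf (lt0r_neq0 hp)).
  rewrite mulfVK ?gt_eqF //. lra.
move=> h.
have : `|((k - c)%:~R : R)| < 1.
  rewrite h normrM normfV (gtr0_norm hp) ltr_pdivrMr // mul1r ltr_norml.
  apply/andP; split; lra.
move/int_small => /eqP; rewrite subr_eq0 => /eqP kc.
by have := etrans (esym e) hx; rewrite kc; exact: addIr.
Qed.

Lemma periodic_int (f : R -> R) : (forall a, f (a + 2 * pi) = f a) ->
  forall a (k : int), f (a + 2 * pi * k%:~R) = f a.
Proof.
move=> hf.
have hn : forall a (n : nat), f (a + 2 * pi * n%:R) = f a.
  move=> a n; rewrite mulr_natr; exact: (periodicn hf).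
move=> a [n|n].
  exact: hn.
rewrite NegzE intrN mulrN.
by rewrite -[in RHS](subrK (2 * pi * n.+1%:R) a) hn.
Qed.

Lemma sin_ang_rep x : sin (ang_rep x) = sin x.
Proof.
rewrite [in RHS](ang_rep_eq x) periodic_int //.
by move=> a; rewrite mulr2n mulrDl mul1r; exact: sinD2pi.
Qed.

Lemma abs_sin_le x : `|sin x| <= `|x|.
Proof.
have key : forall y : R, 0 < y -> `|sin y| <= `|y|.
  move=> y y0.
  have [c _ hc] := @MVT R sin cos 0 y y0 (fun z _ => is_derive_sin z)
     (continuous_subspaceT (@continuous_sin R)).
  move: hc; rewrite sin0 subr0 subr0 => ->.
  by rewrite normrM ler_piMl // cos_max.
have [y0|y0|->] := ltgtP x 0; last by rewrite sin0 normr0.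
  by rewrite -normrN -sinN -(normrN x); apply: key; rewrite oppr_gt0.
exact: key.
Qed.

Lemma abs_sin_le_ang x : `|sin x| <= ang_abs x.
Proof. by rewrite -sin_ang_rep; exact: abs_sin_le. Qed.

Lemma ang_abs0_sin x : ang_abs x = 0 -> sin x = 0.
Proof.
move=> h; have := abs_sin_le_ang x; rewrite h => h'.
by apply/eqP; rewrite -normr_eq0 eq_le h' normr_ge0.
Qed.

Lemma ang_rep_shift x (k : int) : ang_rep (x + 2 * pi * k%:~R) = ang_rep x.
Proof.
apply: (@ang_rep_uniq _ _ (Num.ceil ((x - pi) / (2 * pi)) + k)).
  exact: ang_rep_itv.
by rewrite {1}(ang_rep_eq x) intrD; ring.
Qed.

Lemma ang_abs_shift x (k : int) : ang_abs (x + 2 * pi * k%:~R) = ang_abs x.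
Proof. by rewrite /ang_abs ang_rep_shift. Qed.

Lemma ang_abs_m2pi x : ang_abs (x - 2 * pi) = ang_abs x.
Proof. by have := ang_abs_shift x (-1); rewrite intrN mulrN mulr1. Qed.

Lemma sin_m2pi x : sin (x - 2 * pi) = sin x.
Proof.
rewrite -[in RHS](subrK (2 * pi : R) x); apply/esym.
by rewrite mulr2n mulrDl mul1r; exact: sinD2pi.
Qed.

Lemma rep_le (r : R) (j : int) : - pi < r <= pi -> `|r| <= `|r + 2 * pi * j%:~R|.
Proof.
move=> /andP[r1 r2].
have hp := @pi2_gt0.
have hpi : 0 < pi :> R by exact: pi_gt0.
have : (j = 0) \/ (1 <= j) \/ (1 <= - j) by lia.
case=> [->|[h|h]]; first by rewrite mulr0 addr0.
  have : 1 <= (j%:~R : R) by rewrite ler1z.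
  move=> hj.
  have h3 : pi < r + 2 * pi * j%:~R by nra.
  rewrite (gtr0_norm (lt_trans hpi h3)) ler_norml; apply/andP; split; nra.
have : 1 <= (- j%:~R : R) by rewrite -intrN ler1z.
move=> hj.
have h3 : r + 2 * pi * j%:~R <= - pi by nra.
rewrite (ler0_norm (le_trans h3 _)); last by rewrite oppr_le0 ltW.
rewrite ler_norml; apply/andP; split; nra.
Qed.

Lemma ang_abs_le_abs (z : R) : ang_abs z <= `|z|.
Proof.
rewrite /ang_abs [X in _ <= `|X|](ang_rep_eq z).
exact/rep_le/ang_rep_itv.
Qed.

Lemma ang_abs_lip x y : ang_abs y <= ang_abs x + `|y - x|.
Proof.
have e := ang_rep_eq x; set c := Num.ceil _ in e.
have hy : y = (y - x + ang_rep x) + 2 * pi * c%:~R.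
  by rewrite -addrA -e subrK.
rewrite {1}hy ang_abs_shift (le_trans (ang_abs_le_abs _)) //.
by rewrite (le_trans (ler_normD _ _)) // addrC.
Qed.

Lemma ang_abs_cont (x : R) : {for x, continuous (@ang_abs R)}.
Proof.
apply/cvgrPdist_lt => e e0.
near=> y.
have hy : `|x - y| < e.
  near: y; apply: cvgr_dist_lt => //; exact: cvg_id.
rewrite (le_lt_trans _ hy) //.
rewrite ler_norml; apply/andP; split.
  have := ang_abs_lip x y; rewrite distrC; lra.
have := ang_abs_lip y x; lra.
Unshelve. all: by end_near.
Qed.

Lemma hcrit_bound y : `|hcrit y| <= 1.
Proof.
rewrite /hcrit; have [a0|a0] := eqVneq (ang_abs y) 0.
  by rewrite a0 invr0 mulr0 normr0.
have ap : 0 < ang_abs y by rewrite lt0r a0 normr_ge0.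
rewrite normrM normfV (gtr0_norm ap) ler_pdivrMr // mul1r.
exact: abs_sin_le_ang.
Qed.

Lemma hcrit_mul y : hcrit y * ang_abs y = sin y.
Proof.
rewrite /hcrit; have [a0|a0] := eqVneq (ang_abs y) 0.
  by rewrite a0 mulr0 ang_abs0_sin.
by rewrite mulfVK.
Qed.

Lemma hcrit_cont y : ang_abs y != 0 -> {for y, continuous (@hcrit R)}.
Proof.
move=> a0; rewrite /hcrit.
apply: (@continuousM _ _ sin (fun x => (ang_abs x)^-1)); first exact: continuous_sin.
exact: (@continuousV _ _ (@ang_abs R) y a0 (@ang_abs_cont y)).
Qed.

Lemma hcrit_m2pi y : hcrit (y - 2 * pi) = hcrit y.
Proof. by rewrite /hcrit ang_abs_m2pi sin_m2pi. Qed.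

Lemma hcrit_meas : measurable_fun setT (@hcrit R).
Proof.
set D := (@ang_abs R) @^-1` [set x | x != 0].
have oD : open D.
  apply: open_comp; last exact: open_neq.
  by move=> x _; exact: ang_abs_cont.
have mD : measurable D by exact: measurable_realfun.open_measurable.
have -> : @hcrit R = (@hcrit R) \_ D.
  apply/funext => y; rewrite patchE; case: ifPn => // /negP yD.
  have : ang_abs y = 0 by apply: contrapT => h; apply: yD; rewrite inE; exact/eqP.
  by rewrite /hcrit => ->; rewrite invr0 mulr0.
apply/(measurable_restrictT _ mD).
apply: measurable_realfun.open_continuous_measurable_fun => // y; rewrite inE => yD.
exact: hcrit_cont.
Qed.
End Ang.
Lemma key3 (R : realType) (A : nat -> R) (a : R) (B C : nat -> nat -> R) (b c : nat -> R) :
  (forall k n, `|A n - B k n| <= C k n) -> (forall k, `|a - b k| <= c k) ->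
  (forall k, B k n @[n --> \oo] --> b k) -> (forall k, C k n @[n --> \oo] --> c k) ->
  c k @[k --> \oo] --> 0 -> A n @[n --> \oo] --> a.
Proof.
move=> hA ha hB hC hc; apply/cvgrPdist_lt => e e0.
have e5 : 0 < e / 5 by rewrite divr_gt0.
near \oo => k.
have hk : `|0 - c k| < e / 5.
  by near: k; exact: (cvgr_dist_lt _ _ hc _ e5).
near=> n.
have h1 : `|b k - B k n| < e / 5.
  by near: n; exact: (cvgr_dist_lt _ _ (hB k) _ e5).
have h2 : `|c k - C k n| < e / 5.
  by near: n; exact: (cvgr_dist_lt _ _ (hC k) _ e5).
have h3 := hA k n; have h4 := ha k.
move: hk h1 h2 h3 h4; rewrite !ltr_norml !ler_norml.
move=> /andP[? ?] /andP[? ?] /andP[? ?] /andP[? ?] /andP[? ?].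
apply/andP; split; lra.
Unshelve. all: by end_near.
Qed.

Lemma int_bounded d (T : measurableType d) (R : realType) (P : probability T R)
  (f : T -> R) (M : R) : measurable_fun setT f -> (forall x, `|f x| <= M) ->
  P.-integrable setT (EFin \o f).
Proof.
move=> mf hM; apply/integrableP; split; first exact/measurable_realfun.measurable_EFinP.
have M0 : 0 <= M.
  by have := hM point; apply: le_trans.
apply: (@le_lt_trans _ _ (M%:E * P setT)%E).
  apply: integral_le_bound => //.
    exact/measurable_realfun.measurable_EFinP.
  by apply: aeW => x _ /=; rewrite lee_fin.
by rewrite probability_setT mule1 ltry.
Qed.

Section Main.
Variables (R : realType) (theta : R).

Definition Gf (p : R * R) : R := hcrit (theta - p.1).
Definition Bf (s : R) (p : R * R) : R := sin (theta - p.1) / (s + ang_abs (theta - p.1)).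
Definition Cf (s : R) (p : R * R) : R := s / (s + ang_abs (theta - p.1)).

Lemma meas_shift (F : R -> R) : measurable_fun setT F ->
  measurable_fun setT (fun p : R * R => F (theta - p.1)).
Proof.
move=> mF; apply: (measurableT_comp mF).
exact: measurable_realfun.measurable_funB (measurable_cst _) measurable_fst.
Qed.

Lemma cont_shift (F : R -> R) : continuous F ->
  continuous (fun p : R * R => F (theta - p.1)).
Proof.
move=> cF p.
apply: (@continuous_comp _ _ _ (fun p : R * R => theta - p.1) F); last exact: cF.
apply: cvgB; first exact: cvg_cst.
exact: cvg_fst.
Qed.

Lemma ang_abs_ge0 (y : R) : 0 <= ang_abs y.
Proof. exact: normr_ge0. Qed.

Lemma Fs_cont (s : R) : 0 < s -> continuous (fun y : R => sin y / (s + ang_abs y)).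
Proof.
move=> s0 y; apply: (@continuousM _ _ sin (fun y => (s + ang_abs y)^-1)); first exact: continuous_sin.
apply: (@continuousV _ _ (fun y => s + ang_abs y)); first by rewrite gt_eqF // ltr_pwDl // ang_abs_ge0.
apply: (@continuousD _ _ _ (fun=> s) (@ang_abs R)); first exact: cvg_cst.
exact: ang_abs_cont.
Qed.

Lemma Cs_cont (s : R) : 0 < s -> continuous (fun y : R => s / (s + ang_abs y)).
Proof.
move=> s0 y; apply: (@continuousM _ _ (fun=> s) (fun y => (s + ang_abs y)^-1)); first exact: cvg_cst.
apply: (@continuousV _ _ (fun y => s + ang_abs y)); first by rewrite gt_eqF // ltr_pwDl // ang_abs_ge0.
apply: (@continuousD _ _ _ (fun=> s) (@ang_abs R)); first exact: cvg_cst.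
exact: ang_abs_cont.
Qed.

Lemma Bf_bound s p : 0 < s -> `|Bf s p| <= 1.
Proof.
move=> s0; rewrite /Bf; set y := theta - p.1.
have ha := ang_abs_ge0 y; have hp : 0 < s + ang_abs y by rewrite ltr_pwDl.
rewrite normrM normfV (gtr0_norm hp) ler_pdivrMr // mul1r.
have := abs_sin_le_ang y; lra.
Qed.

Lemma Cf_ge0 s p : 0 < s -> 0 <= Cf s p.
Proof.
move=> s0; rewrite /Cf divr_ge0 ?ltW //.
by rewrite ltr_pwDl // ang_abs_ge0.
Qed.

Lemma Cf_bound s p : 0 < s -> `|Cf s p| <= 1.
Proof.
move=> s0; rewrite ger0_norm ?Cf_ge0 //; rewrite /Cf.
have ha := ang_abs_ge0 (theta - p.1).
rewrite ler_pdivrMr ?mul1r; lra.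
Qed.

Lemma GB_bound s p : 0 < s -> `|Gf p - Bf s p| <= Cf s p.
Proof.
move=> s0; rewrite /Gf /Bf /Cf; set y := theta - p.1.
have ha := ang_abs_ge0 y; have hp : 0 < s + ang_abs y by rewrite ltr_pwDl.
rewrite -hcrit_mul.
have -> : hcrit y - hcrit y * ang_abs y / (s + ang_abs y) =
          hcrit y * (s / (s + ang_abs y)).
  by field; rewrite gt_eqF.
rewrite normrM (ger0_norm (ltW (divr_gt0 s0 hp))).
by rewrite ler_piMl ?hcrit_bound // ltW // divr_gt0.
Qed.

Lemma shift2pi (F : R -> R) : (forall y, F (y - 2 * pi) = F y) ->
  forall th Om, (fun p : R * R => F (theta - p.1)) (th + 2 * pi, Om) =
                (fun p : R * R => F (theta - p.1)) (th, Om).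
Proof. by move=> hF th Om /=; rewrite opprD addrA hF. Qed.

Lemma Gf_meas : measurable_fun setT Gf.
Proof. exact: meas_shift (@hcrit_meas R). Qed.

Lemma Bf_meas s : 0 < s -> measurable_fun setT (Bf s).
Proof.
move=> s0; apply: (meas_shift (F := fun y : R => sin y / (s + ang_abs y))).
exact: measurable_realfun.continuous_measurable_fun (Fs_cont s0).
Qed.

Lemma Cf_meas s : 0 < s -> measurable_fun setT (Cf s).
Proof.
move=> s0; apply: (meas_shift (F := fun y : R => s / (s + ang_abs y))).
exact: measurable_realfun.continuous_measurable_fun (Cs_cont s0).
Qed.

End Main.

Lemma ang_abs_eq0_itv (R : realType) (th x : R) : - pi < th <= pi -> - pi < x <= pi ->
  ang_abs (th - x) = 0 -> th = x.
Proof.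
move=> /andP[t1 t2] /andP[x1 x2] /normr0_eq0 h.
have e := ang_rep_eq (th - x); rewrite h add0r in e.
set c := Num.ceil _ in e.
have hp := @pi2_gt0 R.
have : `|(c%:~R : R)| < 1.
  have -> : (c%:~R : R) = (th - x) / (2 * pi).
    by rewrite e mulrC mulrA mulVf ?mul1r // gt_eqF.
  rewrite normrM normfV (gtr0_norm hp) ltr_pdivrMr // mul1r ltr_norml.
  apply/andP; split; lra.
move/int_small => c0; move: e; rewrite c0 mulr0 => /eqP; rewrite subr_eq0.
by move/eqP.
Qed.

Section Conv.
Variables (R : realType) (theta : R).
Local Notation RI P f := (Rintegral P setT f).

Lemma int_G (P : probability (R * R)%type R) : P.-integrable setT (EFin \o Gf theta).
Proof. exact: (int_bounded P (Gf_meas theta) (fun p => hcrit_bound _)). Qed.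

Lemma int_B (P : probability (R * R)%type R) s : 0 < s -> P.-integrable setT (EFin \o Bf theta s).
Proof. by move=> s0; exact: (int_bounded P (Bf_meas theta s0) (fun p => Bf_bound theta p s0)). Qed.

Lemma int_C (P : probability (R * R)%type R) s : 0 < s -> P.-integrable setT (EFin \o Cf theta s).
Proof. by move=> s0; exact: (int_bounded P (Cf_meas theta s0) (fun p => Cf_bound theta p s0)). Qed.

Lemma Rint_close (P : probability (R * R)%type R) s : 0 < s ->
  `|RI P (Gf theta) - RI P (Bf theta s)| <= RI P (Cf theta s).
Proof.
move=> s0.
have mGB : measurable_fun setT (fun p => Gf theta p - Bf theta s p).
  exact: measurable_realfun.measurable_funB (Gf_meas theta) (Bf_meas theta s0).
have bGB p : `|Gf theta p - Bf theta s p| <= 2.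
  apply: (le_trans (ler_normB _ _)).
  have := hcrit_bound (theta - p.1); have := Bf_bound theta p s0.
  rewrite /Gf; lra.
rewrite -RintegralB //; [|exact: int_G|exact: int_B].
apply: (le_trans (le_normr_Rintegral _ _)) => //.
  exact: (int_bounded P mGB bGB).
apply: le_Rintegral => //.
- apply: (int_bounded P (M := 2)).
    exact: (measurableT_comp (@measurable_realfun.normr_measurable R setT) mGB).
  by move=> p; rewrite normr_id bGB.
- exact: int_C.
- by move=> p _; exact: GB_bound.
Qed.

End Conv.

Section Conv2.
Variables (R : realType) (theta : R).
Local Notation RI P f := (Rintegral P setT f).

Lemma C_to0 (mu : probability (R * R)%type R) (hmu : is_probTR mu)
  (ht : theta \in `]-pi, pi]) (h0 : mu (fst @^-1` [set theta]) = 0%E) :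
  RI mu (Cf theta (harmonic k)) @[k --> \oo] --> 0.
Proof.
set N := (fst @^-1` [set theta] : set (R * R)) `|` ~` (`]-pi, pi] `*` setT).
have mN1 : measurable (fst @^-1` [set theta] : set (R * R)).
  rewrite -[X in measurable X]setTI.
  exact: (@measurable_fst _ _ R R measurableT [set theta] (measurable_set1 theta)).
have mS : measurable (`]-pi, pi] `*` setT : set (R * R)).
  exact: measurableX (measurable_itv _) measurableT.
have N0 : mu N = 0%E.
  apply: null_set_setU => //; first exact: measurableC.
  have h := probability_setC mu mS; rewrite hmu in h.
  by apply: (etrans h); rewrite subee.
have hae : {ae mu, forall x, setT x ->
    (fun k => (Cf theta (harmonic k) x)%:E) @ \oo --> 0%E}.
  exists N; split => //; first by apply: measurableU => //; exact: measurableC.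
  move=> x /= nPx; apply: contrapT => nNx; apply: nPx => _.
  have x1 : x.1 <> theta by move=> e; apply: nNx; left.
  have x2 : (`]-pi, pi] `*` setT) x by apply: contrapT => e; apply: nNx; right.
  have a0 : ang_abs (theta - x.1) != 0.
    apply/eqP => /ang_abs_eq0_itv h; apply: x1; apply/esym/h.
      by move: ht; rewrite in_itv.
    by case: x2 => /=; rewrite in_itv.
  apply: cvg_EFin; first by apply: nearW.
  rewrite /comp /Cf /=.
  have h1 : (fun k => harmonic k + ang_abs (theta - x.1)) @ \oo --> ang_abs (theta - x.1).
    rewrite -[X in _ --> X]add0r.
    by apply: cvgD; [exact: cvg_harmonic | exact: cvg_cst].
  rewrite -(mul0r (ang_abs (theta - x.1))^-1).
  apply: (@cvgM _ _ _ _ harmonic (fun k => (harmonic k + ang_abs (theta - x.1))^-1)).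
    exact: cvg_harmonic.
  exact: cvgV a0 h1.
have ig : mu.-integrable setT (cst 1%E).
  have b1 : forall _ : R * R, `|(1 : R)| <= 1 by move=> _; rewrite normr1.
  exact: (int_bounded mu (f := fun=> (1 : R)) (M := 1) (measurable_cst _) b1).
have [_ _ h] := dominated_convergence (mu := mu) measurableT
  (f_ := fun k x => (Cf theta (harmonic k) x)%:E) (f := cst 0%E) (g := cst 1%E)
  (fun k => (measurable_realfun.measurable_EFinP _ _).2 (Cf_meas theta (harmonic_gt0 k)))
  (measurable_cst _) hae ig
  (aeW _ (fun x n _ => Cf_bound theta x (harmonic_gt0 n))).
rewrite integral0 in h.
exact: (fine_cvg h).
Qed.

End Conv2.

Section Final.
Variables (R : realType).
Local Notation RI P f := (Rintegral P setT f).

Lemma conv_G (theta : R) (mun : nat -> probability (R * R)%type R)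
  (mu : probability (R * R)%type R) (hcvg : narrow_cvg mun mu) (hmu : is_probTR mu)
  (ht : theta \in `]-pi, pi]) (h0 : mu (fst @^-1` [set theta]) = 0%E) :
  RI (mun n) (Gf theta) @[n --> \oo] --> RI mu (Gf theta).
Proof.
apply: (key3 (B := fun k n => RI (mun n) (Bf theta (@harmonic R k)))
  (C := fun k n => RI (mun n) (Cf theta (@harmonic R k)))
  (b := fun k => RI mu (Bf theta (@harmonic R k)))
  (c := fun k => RI mu (Cf theta (@harmonic R k)))).
- by move=> k n; exact: Rint_close (harmonic_gt0 k).
- by move=> k; exact: Rint_close (harmonic_gt0 k).
- move=> k; apply: hcvg.
  + exact: cont_shift (Fs_cont (harmonic_gt0 k)).
  + by exists 1 => p; exact: Bf_bound (harmonic_gt0 k).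
  + by apply: (shift2pi theta (F := fun y => sin y / (harmonic k + ang_abs y))) => y; rewrite sin_m2pi ang_abs_m2pi.
- move=> k; apply: hcvg.
  + exact: cont_shift (Cs_cont (harmonic_gt0 k)).
  + by exists 1 => p; exact: Cf_bound (harmonic_gt0 k).
  + by apply: (shift2pi theta (F := fun y => harmonic k / (harmonic k + ang_abs y))) => y; rewrite ang_abs_m2pi.
- exact: C_to0.
Qed.

Lemma RI_D (th : R) (P : probability (R * R)%type R) :
  Rintegral P [set p : R * R | ang_abs (th - p.1) != 0] (fun p => hcrit (th - p.1))
  = RI P (Gf th).
Proof.
rewrite Rintegral_mkcond; congr Rintegral; apply/funext => p.
rewrite patchE; case: ifPn => // pD.
have h : ang_abs (th - p.1) = 0.
  by apply/eqP; apply: contraNT pD => h; rewrite inE.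
by rewrite /Gf /hcrit h invr0 mulr0.
Qed.

Lemma supdiff_eq (K : R) (nu mu : probability (R * R)%type R) (th : R) :
  supdiff K nu mu th = (`|K * (RI mu (Gf th) - RI nu (Gf th))|)%:E.
Proof.
rewrite /supdiff.
have e : forall Om, tnorm (tsub (Vfield K nu th Om) (Vfield K mu th Om)) =
    `|K * (RI mu (Gf th) - RI nu (Gf th))|.
  move=> Om; rewrite /tnorm /tsub /Vfield /Pfield /= !RI_D.
  set I1 := RI nu _; set I2 := RI mu _.
  have -> : ((Om - K * I1) * - sin th - (Om - K * I2) * - sin th) ^+ 2 +
      ((Om - K * I1) * cos th - (Om - K * I2) * cos th) ^+ 2 + (0 - 0) ^+ 2 =
      (K * (I2 - I1)) ^+ 2 * (cos th ^+ 2 + sin th ^+ 2) by ring.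
  by rewrite cos2Dsin2 mulr1 sqrtr_sqr.
have -> : [set (tnorm (tsub (Vfield K nu th Om) (Vfield K mu th Om)))%:E | Om in [set: R]]
    = [set (`|K * (RI mu (Gf th) - RI nu (Gf th))|)%:E].
  apply/seteqP; split => [x [Om _ <-]|x ->] /=; first by rewrite e.
  by exists 0 => //; rewrite e.
exact: ereal_sup1.
Qed.

Lemma part1 (K : R) (hK : 0 < K) (mun : nat -> probability (R * R)%type R)
  (mu : probability (R * R)%type R) (hmu : is_probTR mu) (hcvg : narrow_cvg mun mu)
  (theta : R) (ht : theta \in `]-pi, pi]) (h0 : mu (fst @^-1` [set theta]) = 0%E) :
  (fun n => supdiff K (mun n) mu theta) @ \oo --> 0%E.
Proof.
have hc := conv_G hcvg hmu ht h0.
rewrite (_ : (fun n => _) = fun n => (`|K * (RI mu (Gf theta) - RI (mun n) (Gf theta))|)%:E); last first.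
  by apply/funext => n; rewrite supdiff_eq.
apply: cvg_EFin; first by apply: nearW.
apply/cvgrPdist_lt => e e0.
have eK : 0 < e / K by rewrite divr_gt0.
near=> n.
have hn : `|RI mu (Gf theta) - RI (mun n) (Gf theta)| < e / K.
  by near: n; exact: (cvgr_dist_lt _ _ hc _ eK).
rewrite /comp /= sub0r normrN normr_id normrM (gtr0_norm hK).
by rewrite -ltr_pdivlMl // mulrC.
Unshelve. all: by end_near.
Qed.

End Final.

Definition fstR (R : realType) : (R * R)%type -> R := fst.
HB.instance Definition _ (R : realType) :=
  @isMeasurableFun.Build _ _ (R * R)%type R (@fstR R) (@measurable_fst _ _ R R).

Theorem mainTheorem18 (R : realType) (K : R) (hK : 0 < K)
  (mun : nat -> probability (R * R)%type R) (mu : probability (R * R)%type R)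
  (hmun : forall n, is_probTR (mun n)) (hmu : is_probTR mu)
  (hcvg : narrow_cvg mun mu) :
  (forall theta : R, theta \in `]-pi, pi] ->
     mu (fst @^-1` [set theta]) = 0%E ->
     (fun n => supdiff K (mun n) mu theta) @ \oo --> 0%E)
  /\
  (lebesgue_measure).-negligible
     [set theta : R | theta \in `]-pi, pi] /\
        ~ ((fun n => supdiff K (mun n) mu theta) @ \oo --> 0%E)].
Proof.
split; first by move=> th ht h0; exact: part1.
pose X : {RV mu >-> R} := @fstR R.
have cX := pmf_gt0_countable X.
exists [set r | 0 < pmf X r]; split.
- by apply: countable_measurable => // t; exact: measurable_set1.
- exact: countable_lebesgue_measure0.
move=> th [ht nc] /=.
have hm : measurable (fst @^-1` [set th] : set (R * R)).
  rewrite -[X in measurable X]setTI.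
  exact: (@measurable_fst _ _ R R measurableT [set th] (measurable_set1 th)).
rewrite /pmf; apply: fine_gt0; apply/andP; split.
  rewrite lt0e measure_ge0 andbT; apply/negP => /eqP h0.
  by apply: nc; apply: part1.
apply: (le_lt_trans (probability_le1 mu hm)); exact: ltey.
Qed.
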